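(* In the Mahi-Mahi protocol, if an honest validator commits some block $b$ in a leader slot $s$, then no other honest validator decides to directly skip the slot $s$.
   Context: Setting: $n=3f+1$ validators, at most $f$ Byzantine; honest validators create exactly one block per round, Byzantine ones may equivocate. Each valid block of round $r$ references (parents) at least $2f+1$ blocks of round $r-1$. Each validator has a local DAG of valid blocks, containing a block only with all its causal history. A block $b$ of round $r'$ is a vote for a block $L$ of round $r<r'$ with author $a$ if the first block with author $a$ and round $r$ met in the deterministic depth-first search from $b$ along parent references is $L$. With wave length $w\in\{4,5\}$, a block of round $r+w-1$ is a certificate for a block $L$ of round $r$ if at least $2f+1$ of its parents are votes for $L$. Leader slots of round $r$ are pairs (validator, $r$) chosen by a global common coin, identical for all validators, totally ordered. A validator classifies slots: direct skip if its local DAG has $2f+1$ blocks of round $r+w-2$ that are not votes for the block $L$ in the slot; direct commit of $L$ if it has $2f+1$ round-$(r+w-1)$ certificates for $L$; otherwise an indirect rule: with anchor the first non-skipped slot of round $>r+w-1$, if the anchor is committed with $A$, commit $L$ if there is a certificate $c$ for $L$ with a path from $A$ to $c$, else skip; if the anchor is undecided, the slot is undecided. (In particular, a slot is only committed with $L$ if the validator's DAG contains a certificate for $L$.) *)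

(* Defs.v *)
From mathcomp Require Import all_boot.
Set Implicit Arguments.
Unset Strict Implicit.
Unset Printing Implicit Defensive.

Section MahiMahi.

Variable f : nat.
Local Notation V := 'I_(3 * f + 1).

(* Abstract universe of blocks: each block has an author, a round, and an
   ordered list of parent references (the order fixes the deterministic DFS). *)
Variable Block : eqType.
Variables (author : Block -> V) (round : Block -> nat)
          (parents : Block -> seq Block).

Definition quorum : nat := 2 * f + 1.

(* number of distinct authors among a sequence of blocks (stake of the set) *)
Definition nauth (s : seq Block) : nat := size (undup (map author s)).

Definition valid (b : Block) : bool :=
  if round b is r.+1 then
    all (fun p => round p == r) (parents b) && (quorum <= nauth (parents b))
  else parents b == [::].

(* The order of first occurrences coincides with that of a DFS with a visited
   set. Fuel (round b).+1 covers the whole causal history of a valid block. *)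
Fixpoint dfs (k : nat) (b : Block) : seq Block :=
  if k is k'.+1 then b :: flatten (map (dfs k') (parents b)) else [::].

Definition history (b : Block) : seq Block := dfs (round b).+1 b.

Definition is_vote (b L : Block) : bool :=
  (round L < round b) &&
  (ohead [seq x <- history b | (author x == author L) && (round x == round L)]
     == Some L).

Variable w : nat.

Definition is_cert (c L : Block) : bool :=
  (round c == round L + w - 1) &&
  (quorum <= nauth [seq p <- parents c | is_vote p L]).

Definition slot := (V * nat)%type.
Definition in_slot (s : slot) (L : Block) : bool :=
  (author L == s.1) && (round L == s.2).

(* common coin: ordered list of leaders of each round; slots are ordered by
   round, then by position in that list. *)
Variable leaders : nat -> seq V.

Definition slots_between (r1 r2 : nat) : seq slot :=
  flatten [seq [seq (a, r) | a <- leaders r] | r <- iota r1 (r2.+1 - r1)].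

Definition reaches (A c : Block) : Prop :=
  exists p : seq Block, path (fun x y => y \in parents x) A p /\ last A p = c.

Section LocalDAG.
Variable D : seq Block.

Definition maxr : nat := \max_(b <- D) round b.

Definition dskip (s : slot) : Prop :=
  forall L, in_slot s L ->
    quorum <= nauth [seq x <- D | (round x == s.2 + w - 2) && ~~ is_vote x L].

Definition dcommit (s : slot) (L : Block) : bool :=
  in_slot s L && (quorum <= nauth [seq c <- D | is_cert c L]).

Inductive status := SCommit of Block | SSkip | SUndec.

Fixpoint decide (k : nat) (s : slot) (x : status) : Prop :=
  (dskip s /\ x = SSkip) \/
  (~ dskip s /\ exists L, dcommit s L /\ x = SCommit L) \/
  (~ dskip s /\ (forall L, ~~ dcommit s L) /\
   match k with
   | 0 => x = SUndec
   | k'.+1 =>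
     let later := slots_between (s.2 + w) maxr in
     (* every later slot (round > r+w-1) is skipped: no anchor *)
     ((forall s', s' \in later -> decide k' s' SSkip) /\ x = SUndec) \/
     (* s' is the anchor: the first non-skipped slot of round > r+w-1 *)
     (exists pre s' post,
        later = pre ++ s' :: post /\
        (forall s'', s'' \in pre -> decide k' s'' SSkip) /\
        ~ decide k' s' SSkip /\
        ((exists A, decide k' s' (SCommit A) /\
           ((exists L c, [/\ in_slot s L, c \in D, is_cert c L, reaches A c
                           & x = SCommit L]) \/
            ((~ exists L c, [/\ in_slot s L, c \in D, is_cert c L & reaches A c])
              /\ x = SSkip)))
         \/ (decide k' s' SUndec /\ x = SUndec)))
   end).

Definition commits (s : slot) (L : Block) : Prop :=
  decide maxr.+1 s (SCommit L).

End LocalDAG.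
End MahiMahi.

(* Main.v *)
Require Import Defs.
From mathcomp Require Import all_boot zify.

Lemma quorum_inter (f : nat) (honest : {set 'I_(3 * f + 1)})
  (s1 s2 : seq 'I_(3 * f + 1)) :
  #|~: honest| <= f -> 2 * f + 1 <= size (undup s1) -> 2 * f + 1 <= size (undup s2) ->
  exists a, [/\ a \in honest, a \in s1 & a \in s2].
Proof.
move=> Hh H1 H2.
set A1 := [set x in s1]; set A2 := [set x in s2].
have c1 : #|A1| = size (undup s1).
  rewrite cardsE -(card_uniqP (undup_uniq s1)); apply: eq_card => x.
  by rewrite mem_undup.
have c2 : #|A2| = size (undup s2).
  rewrite cardsE -(card_uniqP (undup_uniq s2)); apply: eq_card => x.
  by rewrite mem_undup.
have cU := cardsUI A1 A2.
have mU : #|A1 :|: A2| <= 3 * f + 1 by rewrite -[X in _ <= X]card_ord max_card.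
case: (boolP ((A1 :&: A2) \subset ~: honest)) => Hs.
  have HI : f.+1 <= #|A1 :&: A2| by move: cU mU; rewrite c1 c2; lia.
  by have := leq_trans HI (leq_trans (subset_leq_card Hs) Hh); rewrite ltnn.
case/subsetPn: Hs => a; rewrite !inE negbK => /andP[Ha1 Ha2] Hah.
by exists a.
Qed.

Theorem lemma3 (f : nat) (Block : eqType)
  (author : Block -> 'I_(3 * f + 1)) (round : Block -> nat)
  (parents : Block -> seq Block) (w : nat)
  (leaders : nat -> seq 'I_(3 * f + 1))
  (honest : {set 'I_(3 * f + 1)})
  (dag : 'I_(3 * f + 1) -> seq Block)
  (v v' : 'I_(3 * f + 1)) (s : 'I_(3 * f + 1) * nat) (b : Block) :
  (w = 4 \/ w = 5) ->
  #|~: honest| <= f ->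
  (forall r, uniq (leaders r)) ->
  (* honest local DAGs contain only valid blocks, with all their causal history *)
  (forall u, u \in honest -> forall x, x \in dag u -> valid author round parents x) ->
  (forall u, u \in honest -> forall x, x \in dag u ->
     forall p, p \in parents x -> p \in dag u) ->
  (* honest validators create (at most) one block per round *)
  (forall u1 u2 x1 x2, u1 \in honest -> u2 \in honest ->
     x1 \in dag u1 -> x2 \in dag u2 -> author x1 \in honest ->
     author x1 = author x2 -> round x1 = round x2 -> x1 = x2) ->
  v \in honest -> v' \in honest -> v != v' ->
  s.1 \in leaders s.2 ->
  commits author round parents w leaders (dag v) s b ->
  ~ dskip author round parents w (dag v') s.
Proof.
move=> Hw Hh _ Hval Hclos Huniq Hv Hv' _ _ Hcom Hskip.
have [c [Hsl Hc Hcert]] : exists c, [/\ in_slot author round s b, c \in dag v &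
    is_cert author round parents w c b].
  move: Hcom; rewrite /commits /=.
  case=> [[_ //]|[[_ [L [HL [Eb]]]]|[_ [_ [[_ //]|]]]]].
    subst L; move: HL; rewrite /dcommit => /andP[HsL Hq].
    case E: [seq c <- dag v | is_cert author round parents w c b] Hq => [|c t].
      by rewrite /nauth /quorum /=; lia.
    move=> _; have : c \in [seq c <- dag v | is_cert author round parents w c b].
      by rewrite E inE eqxx.
    by rewrite mem_filter => /andP[Hc1 Hc2]; exists c.
  move=> [pre [s' [post [_ [_ [_ [[A [_ [[L [c [HsL Hc Hcc _ [Eb]]]]|[_ //]]]]|[_ //]]]]]]]].
  by subst L; exists c.
have Hsk := Hskip b Hsl.
move: Hcert; rewrite /is_cert => /andP[/eqP Hrc Hq].
have [a [Ha Ha1 Ha2]] := @quorum_inter f honest _ _ Hh Hq Hsk.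
case/mapP: Ha1 => x1; rewrite mem_filter => /andP[Hvote Hx1p] Hax1.
case/mapP: Ha2 => x2; rewrite mem_filter => /andP[/andP[/eqP Hr2 Hnv] Hx2] Hax2.
have Hx1 : x1 \in dag v by exact: Hclos Hv c Hc x1 Hx1p.
have Hr1 : round x1 = round b + w - 2.
  have := Hval v Hv c Hc; rewrite /valid Hrc.
  have -> : round b + w - 1 = (round b + w - 2).+1 by case: Hw => ->; lia.
  by case/andP => /allP /(_ x1 Hx1p) /eqP.
have Hsb : round b = s.2 by move: Hsl => /andP[_ /eqP].
have E : x1 = x2.
  apply: (Huniq v v' x1 x2 Hv Hv' Hx1 Hx2); first by rewrite -Hax1.
    by rewrite -Hax1 -Hax2.
  by rewrite Hr1 Hr2 Hsb.
by rewrite -E Hvote in Hnv.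
Qed.
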